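(* Let $p\ge7$ be prime, $F$ a number field with $\mathbb{Q}(p)\subseteq F$, and $c_p\in G_{\mathbb{Q}}$ an element acting nontrivially on $\mathbb{Q}(p)$. Let $\overline\rho:G_F\to\mathrm{PGL}_2(\mathbb{F}_p)$ be a continuous homomorphism with cyclotomic determinant (so $\overline\rho$ takes values in $\mathrm{PSL}_2(\mathbb{F}_p)$). Then $X_{\overline\rho}(p)$ is defined over $\mathbb{Q}$ if and only if there exist $g\in\mathrm{PGL}_2(\mathbb{F}_p)\setminus\mathrm{PSL}_2(\mathbb{F}_p)$ and a homomorphism $\overline r:G_{\mathbb{Q}(p)}\to\mathrm{PSL}_2(\mathbb{F}_p)$ with $\overline r|_{G_F}=\overline\rho$, such that $\overline r(c_p^2)=g^2$ and $\overline r(c_p^{-1}\sigma c_p)=g^{-1}\overline r(\sigma)g$ for all $\sigma\in G_{\mathbb{Q}(p)}$.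
   Context: $G_K=\mathrm{Gal}(\overline{\mathbb{Q}}/K)$. $\mathbb{Q}(p)$ is the unique quadratic subfield of $\mathbb{Q}(\zeta_p)$. $\overline\varepsilon_p^{\mathrm{pr}}$ is the mod-$p$ cyclotomic character composed with $\mathbb{F}_p^\times\to\mathbb{F}_p^\times/\mathbb{F}_p^{\times2}$; determinants on $\mathrm{PGL}_2(\mathbb{F}_p)$ take values in $\mathbb{F}_p^\times/\mathbb{F}_p^{\times2}$ and $\mathrm{PSL}_2(\mathbb{F}_p)$ is the kernel; ''cyclotomic determinant'' means $\det\overline\rho=\overline\varepsilon_p^{\mathrm{pr}}$ on $G_F$. $\overline\rho^\vee(\sigma)=\overline\rho(\sigma^{-1})^t$. Fix a non-residue $v\in\mathbb{F}_p^\times$, $V=\begin{pmatrix}0&v\\-1&0\end{pmatrix}$, and let $X(p)$ be the model over $\mathbb{Q}$ of the principal modular curve of level $p$ given by the subgroup $\mathbb{F}_p^\times I\cup\mathbb{F}_p^\times V\subseteq\mathrm{GL}_2(\mathbb{F}_p)$; $\mathrm{Aut}_{\overline{\mathbb{Q}}}X(p)\cong\mathrm{PSL}_2(\mathbb{F}_p)$ with $G_{\mathbb{Q}}$ acting by $\sigma\cdot x=\eta(\sigma)x\eta(\sigma)^{-1}$, where $\eta(\sigma)=1$ if $\sigma$ fixes $\mathbb{Q}(p)$ and $\eta(\sigma)=V$ otherwise. $\xi(\sigma)=\overline\rho^\vee(\sigma)\eta(\sigma)$ is a $1$-cocycle $G_F\to\mathrm{PSL}_2(\mathbb{F}_p)$,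 $X_{\overline\rho}(p)$ is the corresponding twist of $X(p)$ over $F$, and it is ''defined over $\mathbb{Q}$'' if $[\xi]$ lies in the image of restriction $H^1(G_{\mathbb{Q}},\mathrm{PSL}_2(\mathbb{F}_p))\to H^1(G_F,\mathrm{PSL}_2(\mathbb{F}_p))$. *)

(* Defs.v *)
(* Q-bar is modelled by MathComp's algC (the algebraic
   numbers), so G_Q = ring automorphisms of algC, viewed as functions. *)
From HB Require Import structures.
From mathcomp Require Import all_boot all_order all_algebra all_fingroup all_field.
From Stdlib Require Import ClassicalDescription.
Set Implicit Arguments. Unset Strict Implicit. Unset Printing Implicit Defensive.
Import GRing.Theory Num.Theory.
Local Open Scope ring_scope.

(* sigma is an element of G_Q = Aut(Qbar) (ring automorphisms automatically fix Q) *)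
Definition isAut (s : algC -> algC) : Prop :=
  [/\ (forall x y, s (x + y) = s x + s y),
      (forall x y, s (x * y) = s x * s y),
      s 1 = 1 & bijective s].

Definition GalK (K : algC -> Prop) (s : algC -> algC) : Prop :=
  isAut s /\ forall x, K x -> s x = x.

Definition GQ (s : algC -> algC) : Prop := isAut s.

Definition number_field (K : algC -> Prop) : Prop :=
  [/\ K 0 /\ K 1,
      (forall x y, K x -> K y -> K (x - y)),
      (forall x y, K x -> K y -> K (x * y)),
      (forall x, K x -> K (x^-1))
    & exists (n : nat) (b : 'I_n -> algC),
        forall x, K x -> exists a : 'I_n -> rat, x = \sum_(i < n) ratr (a i) * b i].

(* pstar = (-1)^((p-1)/2) p ;  Q(p) = Q(sqrt pstar), the quadratic subfield of Q(zeta_p) *)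
Definition pstar (p : nat) : algC := (-1) ^+ (p.-1 %/ 2) * p%:R.
Definition Qp (p : nat) (x : algC) : Prop :=
  exists a b : rat, x = ratr a + ratr b * sqrtC (pstar p).

(* continuity for the Krull topology, target discrete: f is locally constant,
   basic neighbourhoods of sigma being {tau | tau = sigma on a finite set t} *)
Definition krull_continuous (T : Type) (G : (algC -> algC) -> Prop)
  (f : (algC -> algC) -> T) : Prop :=
  forall s, G s -> exists t : seq algC,
    forall u, G u -> (forall x, x \in t -> u x = s x) -> f u = f s.

Definition hom_on (gT : finGroupType) (G : (algC -> algC) -> Prop)
  (f : (algC -> algC) -> gT) : Prop :=
  forall s u, G s -> G u -> f (s \o u) = (f s * f u)%g.

Definition is_square (p : nat) (y : 'F_p) : bool := [exists u : 'F_p, y == u ^+ 2].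

Definition scalarsGL (p : nat) : {set {'GL_2['F_p]}} :=
  [set A : {'GL_2['F_p]} | is_scalar_mx (GLval A)].

Definition PGL2 (p : nat) : finGroupType := coset_of (scalarsGL p).

(* det : PGL_2 -> F_p^x / F_p^x2 is identified with the bit "det is a square";
   PSL_2(F_p) is its kernel *)
Definition det_sq (p : nat) (x : PGL2 p) : bool :=
  is_square (\det (GLval (repr x))).
Definition PSL2 (p : nat) : {set PGL2 p} := [set x : PGL2 p | det_sq x].

Definition GLtr (p : nat) (A : {'GL_2['F_p]}) : {'GL_2['F_p]} :=
  insubd (1%g : {'GL_2['F_p]}) (GLval A)^T.

(* rho^vee(sigma) = rho(sigma^{-1})^t = (rho(sigma)^{-1})^t for a homomorphism rho *)
Definition dual (p : nat) (rho : (algC -> algC) -> PGL2 p) (s : algC -> algC) : PGL2 p :=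
  coset (scalarsGL p) (GLtr ((repr (rho s))^-1)%g).

Definition Vmx (p : nat) (v : 'F_p) : 'M['F_p]_2 :=
  \matrix_(i < 2, j < 2) (if (i == 0) && (j == 1) then v
                          else if (i == 1) && (j == 0) then -1 else 0).
Definition VGL (p : nat) (v : 'F_p) : {'GL_2['F_p]} := insubd (1%g : {'GL_2['F_p]}) (Vmx v).

Definition eta (p : nat) (v : 'F_p) (s : algC -> algC) : PGL2 p :=
  if excluded_middle_informative (forall x, Qp p x -> s x = x) then 1%g else coset (scalarsGL p) (VGL v).

Definition act (p : nat) (v : 'F_p) (s : algC -> algC) (x : PGL2 p) : PGL2 p :=
  (eta v s * x * (eta v s)^-1)%g.

Definition cocycle (p : nat) (v : 'F_p) (G : (algC -> algC) -> Prop)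
  (z : (algC -> algC) -> PGL2 p) : Prop :=
  [/\ forall s, G s -> z s \in PSL2 p,
      forall s u, G s -> G u -> z (s \o u) = (z s * act v s (z u))%g
    & krull_continuous G z].

(* [xi] in the image of H^1(G_Q, PSL_2) -> H^1(G_F, PSL_2) *)
Definition in_res_image (p : nat) (v : 'F_p) (F : algC -> Prop)
  (xi : (algC -> algC) -> PGL2 p) : Prop :=
  exists z, cocycle v GQ z /\
    exists2 b, b \in PSL2 p &
      forall s, GalK F s -> xi s = ((b^-1) * z s * act v s b)%g.

Definition twist_defined_over_Q (p : nat) (v : 'F_p) (F : algC -> Prop)
  (rho : (algC -> algC) -> PGL2 p) : Prop :=
  in_res_image v F (fun s => (dual rho s * eta v s)%g).

(* Main.v *)
Require Import Defs.
From HB Require Import structures.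
From mathcomp Require Import all_boot all_order all_algebra all_fingroup all_solvable all_field.
From Stdlib Require Import FunctionalExtensionality ClassicalDescription Classical.
Set Implicit Arguments. Unset Strict Implicit. Unset Printing Implicit Defensive.
Import GRing.Theory Num.Theory.
Local Open Scope ring_scope.

Section Squares.
Variable R : finFieldType.
Hypothesis podd : odd #|R|.
Definition isq (y : R) := [exists u : R, y == u ^+ 2].

Lemma isqP (x : R) : reflect (exists u, x = u ^+ 2) (isq x).
Proof. by apply: (iffP existsP) => [[u /eqP]|[u ->]]; exists u. Qed.

Lemma sq_exp (w : {unit R}) (k : nat) :
  <[w]>%g = [set: {unit R}] -> isq (val w ^+ k) = ~~ odd k.
Proof.
move=> gen.
have ow : #[w]%g = #|R|.-1 by rewrite /order gen card_finField_unit.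
apply/isqP/idP => [[u Hu]|].
  have u0 : u != 0.
    have w0 : (FinRing.uval w != 0) by rewrite -unitfE (valP w).
    apply/eqP=> u0; move: Hu; rewrite u0 expr0n /= => /eqP.
    by rewrite expf_eq0 (negPf w0) andbF.
  have : FinRing.unit R (etrans (unitfE u) u0) \in <[w]>%g by rewrite gen inE.
  move/cycleP=> [j Hj].
  have : (w ^+ k == w ^+ (j * 2))%g.
    apply/eqP/val_inj; rewrite expgM -Hj /= !FinRing.val_unitX Hu.
    by rewrite expr2.
  rewrite eq_expg_mod_order ow => /eqP Hm.
  have d2 : (2 %| #|R|.-1)%N.
    have c0 : (0 < #|R|)%N by apply/card_gt0P; exists 0.
    by rewrite -subn1 dvdn2 oddB // podd.
  have := congr1 (fun m => m %% 2)%N Hm; rewrite !modn_dvdm //.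
  by rewrite !modn2 oddM /= andbF; case: (odd k).
rewrite -dvdn2 => /dvdnP[j ->]; exists (val w ^+ j); by rewrite -exprM mulnC.
Qed.

Lemma sq_mul (x y : R) : x != 0 -> y != 0 ->
  isq (x * y) = (isq x == isq y).
Proof.
move=> x0 y0.
have /cyclicP[w gen] := field_unit_group_cyclic [set: {unit R}]%G.
have rep z : z != 0 -> exists k, z = val w ^+ k.
  move=> z0; have : FinRing.unit R (etrans (unitfE z) z0) \in <[w]>%g.
    by rewrite -gen inE.
  move/cycleP=> [k Hk]; exists k; by rewrite -FinRing.val_unitX -Hk.
have [k ->] := rep _ x0; have [l ->] := rep _ y0.
rewrite -exprD !sq_exp // oddD.
by case: (odd k); case: (odd l).
Qed.

Lemma sq_scale (a d : R) : a != 0 -> isq (a ^+ 2 * d) = isq d.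
Proof.
move=> a0; apply/isqP/isqP => [[u Hu]|[u ->]].
  exists (u / a); rewrite expr_div_n -Hu mulrC mulrA mulVf ?mul1r //.
  by rewrite expf_neq0.
by exists (a * u); rewrite exprMn.
Qed.

Lemma sq_inv (d : R) : d != 0 -> isq d^-1 = isq d.
Proof.
by move=> d0; rewrite -(sq_scale d^-1 d0) expr2 -mulrA mulfV ?mulr1.
Qed.
End Squares.

Definition gVmx (R : nzRingType) (v : R) : 'M[R]_2 :=
  \matrix_(i < 2, j < 2) (if (i == 0) && (j == 1) then v
                          else if (i == 1) && (j == 0) then -1 else 0).
Lemma det_Vmx (R : comNzRingType) (v : R) : \det (gVmx v) = v.
Proof.
rewrite (expand_det_row _ ord0) big_ord_recl big_ord1 /cofactor !det_mx11 !mxE /=.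
by rewrite !mul0r add0r /bump /= expr1 mulN1r opprK mulr1.
Qed.

Lemma Vmx2 (R : nzRingType) (v : R) : gVmx v *m gVmx v = (- v)%:M.
Proof.
apply/matrixP=> i j; rewrite !mxE big_ord_recl big_ord1 !mxE.
case: i => [[|[|?]] ?] //; case: j => [[|[|?]] ?] //=;
  by rewrite ?mul0r ?mulr0 ?add0r ?addr0 ?mulrN1 ?mulN1r ?mulr1n ?mulr0n ?oppr0.
Qed.

Section PGL.
Variable R : finFieldType.
Local Notation gT := {'GL_2[R]}.
Definition sc : {set gT} := [set A : gT | is_scalar_mx (GLval A)].
Local Notation S := sc.
Definition PGL : finGroupType := coset_of sc.
Definition gdet_sq (x : PGL) : bool := isq (\det (GLval (repr x))).
Definition gtr (A : gT) : gT := insubd (1%g : gT) (GLval A)^T.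
Definition gV (v : R) : gT := insubd (1%g : gT) (gVmx v).

Lemma S_group_set : group_set S.
Proof.
apply/group_setP; split.
  by rewrite inE GL_1E; apply/is_scalar_mxP; exists 1.
move=> x y; rewrite !inE => /is_scalar_mxP[a Ha] /is_scalar_mxP[b Hb].
by apply/is_scalar_mxP; exists (a * b); rewrite GL_ME Ha Hb scalar_mxM.
Qed.
Canonical S_group := Group S_group_set.

Lemma S_central x y : x \in S -> (x * y = y * x)%g.
Proof.
rewrite inE => /is_scalar_mxP[a Ha]; apply: val_inj.
change (GLval (x * y)%g = GLval (y * x)%g).
by rewrite !GL_MxE Ha scalar_mxC.
Qed.

Lemma normS x : x \in 'N(S)%g.
Proof.
apply: (subsetP (cent_sub S)); apply/centP.
by move=> y Hy; exact: (esym (S_central x Hy)).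
Qed.

Lemma coset_eqP x y : coset S x = coset S y <-> (x * y^-1)%g \in S.
Proof.
split=> [E|H].
  apply: (@coset_idr _ S_group); first exact: normS.
  by rewrite coset_morphM ?normS // E -coset_morphM ?normS // mulgV coset_id.
rewrite -(mulgKV y x) coset_morphM ?normS // (coset_id H) mul1g //.
Qed.

Lemma val_gtr (A : gT) : GLval (gtr A) = (GLval A)^T.
Proof. by rewrite /gtr insubdK // unfold_in unitmx_tr GL_unitmx. Qed.

Lemma gtrM (A B : gT) : gtr (A * B)%g = (gtr B * gtr A)%g.
Proof.
apply: val_inj; change (GLval (gtr (A * B)%g) = GLval (gtr B * gtr A)%g).
by rewrite GL_MxE !val_gtr GL_MxE trmx_mul.
Qed.

Lemma gtr1 : gtr (1 : gT)%g = 1%g.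
Proof.
apply: val_inj; change (GLval (gtr (1 : gT)) = GLval (1 : gT)); by rewrite val_gtr GL_1E trmx1.
Qed.

Lemma gtrV (A : gT) : gtr (A^-1)%g = (gtr A)^-1%g.
Proof.
apply: val_inj; change (GLval (gtr (A^-1)%g) = GLval ((gtr A)^-1)%g).
by rewrite val_gtr !GL_VxE val_gtr trmx_inv.
Qed.

Lemma gtrK (A : gT) : gtr (gtr A) = A.
Proof.
apply: val_inj; change (GLval (gtr (gtr A)) = GLval A); by rewrite !val_gtr trmxK.
Qed.

Definition psi (A : gT) : gT := gtr (A^-1)%g.

Lemma psiM A B : psi (A * B)%g = (psi A * psi B)%g.
Proof. by rewrite /psi invMg gtrM. Qed.

Lemma psiV A : psi (A^-1)%g = ((psi A)^-1)%g.
Proof. by rewrite /psi gtrV. Qed.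

Lemma psiK A : psi (psi A) = A.
Proof. by rewrite /psi -gtrV gtrK invgK. Qed.

Lemma psiS A : A \in S -> psi A \in S.
Proof.
rewrite !inE => /is_scalar_mxP[a Ha]; apply/is_scalar_mxP; exists a^-1.
by rewrite val_gtr GL_VxE Ha invmx_scalar tr_scalar_mx.
Qed.

Definition phi (x : PGL) : PGL := coset S (psi (repr x)).

Lemma repr_eq (A : gT) : ((repr (coset S A)) * A^-1)%g \in S.
Proof. by apply/coset_eqP; rewrite coset_reprK. Qed.

Lemma phi_coset A : phi (coset S A) = coset S (psi A).
Proof.
apply/coset_eqP; rewrite -psiV -psiM; exact: psiS (repr_eq A).
Qed.

Lemma cosetK (x : PGL) : coset S (repr x) = x.
Proof. exact: coset_reprK. Qed.

Lemma cosetM (A B : gT) : coset S (A * B)%g = (coset S A * coset S B)%g.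
Proof. by rewrite coset_morphM ?normS. Qed.

Lemma phiM x y : phi (x * y)%g = (phi x * phi y)%g.
Proof.
by rewrite -(cosetK x) -(cosetK y) -cosetM !phi_coset psiM cosetM.
Qed.

Lemma phiK x : phi (phi x) = x.
Proof. by rewrite -(cosetK x) !phi_coset psiK. Qed.


Definition dsq (A : gT) := isq (\det (GLval A)).

Lemma detM_GL (A B : gT) : \det (GLval (A * B)%g) = \det (GLval A) * \det (GLval B).
Proof. by rewrite GL_MxE detM. Qed.

Lemma detV_GL (A : gT) : \det (GLval (A^-1)%g) = (\det (GLval A))^-1.
Proof. by rewrite GL_VxE det_inv. Qed.

Lemma det_sq_coset A : gdet_sq (coset S A) = dsq A.
Proof.
rewrite /gdet_sq /dsq; set B := repr _.
have := repr_eq A; rewrite -/B inE => /is_scalar_mxP[a Ha].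
have -> : B = ((B * A^-1) * A)%g by rewrite mulgKV.
rewrite detM_GL Ha det_scalar sq_scale //.
apply/eqP=> a0; have := GL_det (B * A^-1)%g; rewrite -/(GLval _) Ha a0 det_scalar.
by rewrite expr0n eqxx.
Qed.

Lemma det_sqM (x y : PGL) : odd #|R| -> gdet_sq (x * y)%g = (gdet_sq x == gdet_sq y).
Proof.
move=> po; rewrite -(cosetK x) -(cosetK y) -cosetM !det_sq_coset /dsq detM_GL.
by rewrite sq_mul // GL_det.
Qed.

Lemma det_sq_phi (x : PGL) : gdet_sq (phi x) = gdet_sq x.
Proof.
rewrite -(cosetK x) phi_coset !det_sq_coset /dsq /psi val_gtr det_tr detV_GL.
by rewrite sq_inv // GL_det.
Qed.

Lemma det_sq1 : gdet_sq (1 : PGL)%g.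
Proof.
rewrite -(coset_id (group1 S_group)) det_sq_coset /dsq GL_1E det1.
by apply/existsP; exists 1; rewrite expr1n.
Qed.

Lemma det_sqV (x : PGL) : odd #|R| -> gdet_sq (x^-1)%g = gdet_sq x.
Proof.
move=> po; have := det_sqM (x^-1)%g x po; rewrite mulVg det_sq1.
by case: (gdet_sq x); case: (gdet_sq _).
Qed.

Lemma det_sqJ (b x : PGL) : odd #|R| -> gdet_sq (b^-1 * x * b)%g = gdet_sq x.
Proof.
move=> po; rewrite !det_sqM // det_sqV //.
by case: (gdet_sq x); case: (gdet_sq b).
Qed.

Lemma val_gV (v : R) : v != 0 -> GLval (gV v) = gVmx v.
Proof. by move=> v0; rewrite /gV insubdK // unfold_in unitmxE det_Vmx unitfE. Qed.

Lemma Vbar_sq (v : R) : v != 0 -> (coset S (gV v) * coset S (gV v))%g = 1%g.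
Proof.
move=> v0; rewrite -cosetM coset_id // inE; apply/is_scalar_mxP; exists (-v).
by rewrite GL_MxE val_gV // Vmx2.
Qed.

Lemma det_sq_V (v : R) : v != 0 -> gdet_sq (coset S (gV v)) = isq v.
Proof. by move=> v0; rewrite det_sq_coset /dsq val_gV // det_Vmx. Qed.

Lemma phi1 : phi 1%g = 1%g.
Proof.
rewrite -(coset_id (group1 S_group)) phi_coset /psi invg1 gtr1.
by rewrite coset_id // group1.
Qed.

Lemma phiV (x : PGL) : phi (x^-1)%g = ((phi x)^-1)%g.
Proof.
apply/eqP; rewrite eq_sym eq_invg_mul -phiM mulgV phi1 //.
Qed.
End PGL.


Section Bridge.
Variable p : nat.
Local Notation Fp := ('F_p : finFieldType).

Lemma oddFp : prime p -> odd p -> odd #|Fp|.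
Proof. by move=> pr po; rewrite card_Fp. Qed.

Definition phiP (x : PGL2 p) : PGL2 p := @phi Fp x.

Lemma dualE rho (s : algC -> algC) : dual rho s = phiP (rho s).
Proof. by []. Qed.

Lemma PSLE (x : PGL2 p) : (x \in PSL2 p) = det_sq x.
Proof. by rewrite inE. Qed.

Lemma phiPM (x y : PGL2 p) : phiP (x * y)%g = (phiP x * phiP y)%g.
Proof. exact: (@phiM Fp). Qed.
Lemma phiPK (x : PGL2 p) : phiP (phiP x) = x.
Proof. exact: (@phiK Fp). Qed.
Lemma phiPV (x : PGL2 p) : phiP (x^-1)%g = ((phiP x)^-1)%g.
Proof. exact: (@phiV Fp). Qed.
Lemma det_sq_phiP (x : PGL2 p) : det_sq (phiP x) = det_sq x.
Proof. exact: (@det_sq_phi Fp). Qed.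
Lemma det_sqMP (x y : PGL2 p) : prime p -> odd p -> det_sq (x * y)%g = (det_sq x == det_sq y).
Proof. move=> pr po; exact: (@det_sqM Fp x y (oddFp pr po)). Qed.
Lemma det_sqVP (x : PGL2 p) : prime p -> odd p -> det_sq (x^-1)%g = det_sq x.
Proof. move=> pr po; exact: (@det_sqV Fp x (oddFp pr po)). Qed.
Lemma det_sqJP (b x : PGL2 p) : prime p -> odd p -> det_sq (b^-1 * x * b)%g = det_sq x.
Proof. move=> pr po; exact: (@det_sqJ Fp b x (oddFp pr po)). Qed.
Lemma det_sq1P : det_sq (1 : PGL2 p)%g.
Proof. exact: (@det_sq1 Fp). Qed.
Lemma det_sq_VP (v : 'F_p) : v != 0 -> det_sq (coset (scalarsGL p) (VGL v)) = is_square v.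
Proof. exact: (@det_sq_V Fp v). Qed.
Lemma Vbar_sqP (v : 'F_p) : v != 0 ->
  (coset (scalarsGL p) (VGL v) * coset (scalarsGL p) (VGL v))%g = 1%g.
Proof. exact: (@Vbar_sq Fp v). Qed.
End Bridge.
Section Aut.
Variable s : algC -> algC.
Hypothesis As : isAut s.

Lemma autD x y : s (x + y) = s x + s y. Proof. by case: As. Qed.
Lemma autM x y : s (x * y) = s x * s y. Proof. by case: As. Qed.
Lemma aut1 : s 1 = 1. Proof. by case: As. Qed.

Lemma aut0 : s 0 = 0.
Proof. by apply/(addrI (s 0)); rewrite -autD !addr0. Qed.

Lemma autN x : s (- x) = - s x.
Proof. by apply/(addIr (s x)); rewrite -autD !addNr aut0. Qed.

Lemma autX x n : s (x ^+ n) = s x ^+ n.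
Proof. by elim: n => [|n IH]; rewrite ?expr0 ?aut1 // !exprS autM IH. Qed.

Lemma autV x : s (x^-1) = (s x)^-1.
Proof.
have [->|x0] := eqVneq x 0; first by rewrite invr0 aut0 invr0.
have sx0 : s x != 0.
  apply/eqP=> sx0; have := autM x x^-1; rewrite mulfV // aut1 sx0 mul0r.
  by move/eqP; rewrite oner_eq0.
by apply/(mulfI sx0); rewrite -autM !mulfV // aut1.
Qed.

Lemma autn n : s n%:R = n%:R.
Proof. by elim: n => [|n IH]; rewrite ?aut0 // -addn1 !natrD autD IH aut1. Qed.

Lemma autz (z : int) : s z%:~R = z%:~R.
Proof. by case: z => n; rewrite ?NegzE ?mulrNz ?autN /= autn. Qed.

Lemma autQ q : s (ratr q) = ratr q.
Proof. by rewrite /ratr autM autV !autz. Qed.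

Lemma aut_sum n (f : 'I_n -> algC) : s (\sum_(i < n) f i) = \sum_(i < n) s (f i).
Proof. by apply: (big_morph s autD aut0). Qed.
End Aut.

Lemma isAut_comp s t : isAut s -> isAut t -> isAut (s \o t).
Proof.
move=> As At; split => [x y|x y||] /=; rewrite ?autD ?autM ?aut1 //.
by apply: bij_comp; [case: As | case: At].
Qed.

Lemma isAut_inv s s' : isAut s -> cancel s s' -> cancel s' s -> isAut s'.
Proof.
move=> As K1 K2; split => [x y|x y||].
- by apply: (can_inj K1); rewrite (autD As) !K2.
- by apply: (can_inj K1); rewrite (autM As) !K2.
- by apply: (can_inj K1); rewrite (aut1 As) !K2.
- by exists s.
Qed.

Lemma isAut_id : isAut id.
Proof. by split => //; exists id. Qed.

Section Sqrt.
Variable p : nat.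
Hypothesis p0 : (0 < p)%N.
Local Notation sq := (sqrtC (pstar p)).
Definition fixQ (s : algC -> algC) := forall x, Qp p x -> s x = x.

Lemma pstar_neq0 : pstar p != 0.
Proof. by rewrite /pstar mulf_neq0 ?signr_eq0 // pnatr_eq0 -lt0n. Qed.

Lemma sq_neq0 : sq != 0.
Proof. by rewrite sqrtC_eq0 pstar_neq0. Qed.

Lemma sq_neqN : sq != - sq.
Proof. by rewrite eq_sym eqNr sq_neq0. Qed.

Lemma aut_sq s : isAut s -> s sq = sq \/ s sq = - sq.
Proof.
move=> As; have : s sq ^+ 2 == sq ^+ 2.
  by rewrite -autX // sqrtCK /pstar autM // autX // autN // aut1 // autn.
by rewrite eqf_sqr => /orP[/eqP|/eqP]; [left|right].
Qed.

Lemma fixQP s : isAut s -> fixQ s <-> s sq = sq.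
Proof.
move=> As; split => [H|H x [a [b ->]]].
  by apply: H; exists 0, 1; rewrite !rmorph0 rmorph1 add0r mul1r.
by rewrite (autD As) (autQ As) (autM As) (autQ As) H.
Qed.

Lemma nfixQ s : isAut s -> ~ fixQ s -> s sq = - sq.
Proof.
by move=> As; rewrite fixQP //; case: (aut_sq As).
Qed.

Lemma fixQ_comp s u : isAut s -> isAut u -> (fixQ (s \o u) <-> (fixQ s <-> fixQ u)).
Proof.
move=> As Au; rewrite !fixQP //; last exact: isAut_comp.
have nN := sq_neqN; have nN' : - sq != sq by rewrite eq_sym.
case: (aut_sq As) => Hs; case: (aut_sq Au) => Hu /=; rewrite Hu ?autN // Hs.
all: rewrite ?opprK; have nE : - sq <> sq by apply/eqP.
all: have rE : sq = sq by [].
all: tauto.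
Qed.

End Sqrt.

Lemma GalF_of (F : algC -> Prop) n (b : 'I_n -> algC)
  (Hb : forall x, F x -> exists a : 'I_n -> rat, x = \sum_(i < n) ratr (a i) * b i)
  w : isAut w -> (forall i, w (b i) = b i) -> GalK F w.
Proof.
move=> Aw Hw; split=> // x /Hb [a ->]; rewrite (aut_sum Aw).
by apply: eq_bigr => i _; rewrite (autM Aw) (autQ Aw) Hw.
Qed.

Section Main.
Variables (p : nat) (v : 'F_p) (F : algC -> Prop) (c : algC -> algC)
  (rho : (algC -> algC) -> PGL2 p).
Hypotheses (pr : prime p) (po : odd p) (v0 : v != 0) (vns : ~~ is_square v)
  (QF : forall x, Qp p x -> F x) (Ac : GQ c) (nfc : ~ fixQ p c).
Local Notation Vb := (coset (scalarsGL p) (VGL v)).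
Let p0 : (0 < p)%N := prime_gt0 pr.

Lemma eta_fix s : fixQ p s -> Defs.eta v s = 1%g.
Proof. by rewrite /Defs.eta; case: excluded_middle_informative. Qed.
Lemma eta_nfix s : ~ fixQ p s -> Defs.eta v s = Vb.
Proof. by rewrite /Defs.eta; case: excluded_middle_informative. Qed.

Lemma eta_comp s u : isAut s -> isAut u -> Defs.eta v (s \o u) = (Defs.eta v s * Defs.eta v u)%g.
Proof.
move=> As Au; have H := fixQ_comp p0 As Au.
case: (classic (fixQ p s)) => Hs; case: (classic (fixQ p u)) => Hu.
- rewrite (eta_fix Hs) (eta_fix Hu) (@eta_fix (s \o u)) ?mulg1 //; apply/H; tauto.
- rewrite (eta_fix Hs) (eta_nfix Hu) (@eta_nfix (s \o u)) ?mul1g //; move/H; tauto.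
- rewrite (eta_nfix Hs) (eta_fix Hu) (@eta_nfix (s \o u)) ?mulg1 //; move/H; tauto.
- rewrite (eta_nfix Hs) (eta_nfix Hu) (@eta_fix (s \o u)) ?Vbar_sqP //; apply/H; tauto.
Qed.


Lemma forward : twist_defined_over_Q v F rho ->
   exists (g : PGL2 p) (r : (algC -> algC) -> PGL2 p),
     [/\ g \notin PSL2 p /\ hom_on (GalK (Qp p)) r,
         (forall s, GalK (Qp p) s -> r s \in PSL2 p),
         (forall s, GalK F s -> r s = rho s),
         r (c \o c) = (g ^+ 2)%g
       & forall s t, GalK (Qp p) s -> GalK (Qp p) t ->
           (forall x, c (t x) = s (c x)) ->
           r t = (g^-1 * r s * g)%g].
Proof.
case=> z [[zP zC _] [b bP Hxi]].
pose u s := (b^-1 * (z s * Defs.eta v s) * b)%g.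
have uM s t : GQ s -> GQ t -> u (s \o t) = (u s * u t)%g.
  move=> As At; rewrite /u zC // eta_comp // /Defs.act.
  by rewrite !mulgA mulgKV mulgK.
exists (phiP (u c)), (fun s => phiP (u s)); split.
- split.
  + rewrite PSLE det_sq_phiP /u det_sqJP // det_sqMP // eta_nfix //.
    by have := zP c Ac; rewrite PSLE => ->; rewrite det_sq_VP // (negPf vns).
  + by move=> s t [As _] [At _]; rewrite uM // phiPM.
- move=> s [As fs]; rewrite PSLE det_sq_phiP /u det_sqJP // eta_fix // mulg1.
  by have := zP s As; rewrite PSLE.
- move=> s [As fF]; have fs : fixQ p s := fun x Hx => fF x (QF Hx).
  have := Hxi s (conj As fF); rewrite /Defs.act !eta_fix // invg1 !mulg1 mul1g => E.
  by rewrite /u eta_fix // mulg1 -E; rewrite dualE; exact: phiPK.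
- by rewrite uM // phiPM expgS expg1.
- move=> s t [As fs] [At ft] Hct.
  have E : c \o t = s \o c by apply: functional_extensionality.
  have := uM c t Ac At; rewrite E uM // => H.
  have -> : u t = ((u c)^-1 * u s * u c)%g by rewrite -mulgA H mulKg.
  by rewrite 2!phiPM phiPV.
Qed.
End Main.

Definition Zdef p (R : (algC -> algC) -> PGL2 p) (h : PGL2 p) (c' s : algC -> algC) :=
  if excluded_middle_informative (fixQ p s) then R s else (h * R (c' \o s))%g.
Lemma Zdef_fix p R h c' s : fixQ p s -> @Zdef p R h c' s = R s.
Proof. by rewrite /Zdef; case: excluded_middle_informative. Qed.
Lemma Zdef_nfix p R h c' s : ~ fixQ p s -> @Zdef p R h c' s = (h * R (c' \o s))%g.
Proof. by rewrite /Zdef; case: excluded_middle_informative. Qed.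

Section Main2.
Variables (p : nat) (v : 'F_p) (F : algC -> Prop) (c : algC -> algC)
  (rho : (algC -> algC) -> PGL2 p).
Hypotheses (pr : prime p) (po : odd p) (v0 : v != 0) (vns : ~~ is_square v)
  (QF : forall x, Qp p x -> F x) (Ac : GQ c) (nfc : ~ fixQ p c).
Local Notation Vb := (coset (scalarsGL p) (VGL v)).
Let p0 : (0 < p)%N := prime_gt0 pr.

Lemma backward : number_field F -> hom_on (GalK F) rho -> krull_continuous (GalK F) rho ->
   (exists (g : PGL2 p) (r : (algC -> algC) -> PGL2 p),
     [/\ g \notin PSL2 p /\ hom_on (GalK (Qp p)) r,
         (forall s, GalK (Qp p) s -> r s \in PSL2 p),
         (forall s, GalK F s -> r s = rho s),
         r (c \o c) = (g ^+ 2)%g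
       & forall s t, GalK (Qp p) s -> GalK (Qp p) t ->
           (forall x, c (t x) = s (c x)) ->
           r t = (g^-1 * r s * g)%g]) ->
   twist_defined_over_Q v F rho.
Proof.
move=> NF rhoM rhoC [g [r [[gn rM] rP rrho rcc rconj]]].
have [c' K1 K2] : bijective c by case: Ac.
have Ac' : isAut c' := isAut_inv Ac K1 K2.
have csq : c (sqrtC (pstar p)) = - sqrtC (pstar p) by apply: nfixQ.
have c'sq : c' (sqrtC (pstar p)) = - sqrtC (pstar p).
  have : c (- sqrtC (pstar p)) = sqrtC (pstar p) by rewrite (autN Ac) csq opprK.
  by move/(congr1 c'); rewrite K1 => <-.
have G1 s : isAut s -> ~ fixQ p s -> GalK (Qp p) (c' \o s).
  move=> As ns; split; first exact: isAut_comp.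
  apply: (proj2 (fixQP p (isAut_comp Ac' As))) => /=.
  by rewrite (nfixQ As ns) (autN Ac') c'sq opprK.
have G2 : GalK (Qp p) (c \o c).
  split; first exact: isAut_comp.
  by apply: (proj2 (fixQP p (isAut_comp Ac Ac))) => /=; rewrite csq (autN Ac) csq opprK.
have G3 a : GalK (Qp p) a -> GalK (Qp p) (fun x => c' (a (c x))).
  move=> [Aa fa]; have A3 : isAut (fun x => c' (a (c x))).
    by apply: isAut_comp => //; apply: isAut_comp.
  split=> //; apply: (proj2 (fixQP p A3)) => /=.
  by rewrite csq (autN Aa) ((fixQP p Aa).1 fa) (autN Ac') c'sq opprK.
have G4 s u : GalK (Qp p) s -> GalK (Qp p) u -> GalK (Qp p) (s \o u).
  move=> [As fs] [Au fu]; split; first exact: isAut_comp.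
  by apply/(fixQ_comp p0 As Au); tauto.
have GFQ s : GalK F s -> GalK (Qp p) s.
  by move=> [As fF]; split=> // x Hx; apply: fF; apply: QF.
set h := phiP g.
pose R s := phiP (r s).
have RM s u : GalK (Qp p) s -> GalK (Qp p) u -> R (s \o u) = (R s * R u)%g.
  by move=> Hs Hu; rewrite /R rM // phiPM.
have Rconj a t : GalK (Qp p) a -> GalK (Qp p) t -> (forall x, c (t x) = a (c x)) ->
    R t = (h^-1 * R a * h)%g.
  by move=> Ha Ht Hc; rewrite /R (rconj a t) // 2!phiPM phiPV.
have Rcc : R (c \o c) = (h * h)%g by rewrite /R rcc expgS expg1 phiPM.
pose Z := Zdef R h c'.
have Zf s : fixQ p s -> Z s = R s by exact: Zdef_fix.
have Zn s : ~ fixQ p s -> Z s = (h * R (c' \o s))%g by exact: Zdef_nfix.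
have RE s : R s = phiP (r s) by [].
have hE : h = phiP g by [].
clearbody Z R h.
have ZM s u : GQ s -> GQ u -> Z (s \o u) = (Z s * Z u)%g.
  move=> As Au; have Hsu := fixQ_comp p0 As Au.
  case: (classic (fixQ p s)) => fs; case: (classic (fixQ p u)) => fu.
  - rewrite Zf; last by apply/Hsu; tauto.
    by rewrite (Zf s fs) (Zf u fu) RM.
  - rewrite Zn; last by move/Hsu; tauto.
    rewrite (Zf s fs) (Zn u fu).
    have Ht := G3 s (conj As fs).
    have E : c' \o (s \o u) = (fun x => c' (s (c x))) \o (c' \o u).
      by apply: functional_extensionality => x /=; rewrite K2.
    rewrite E RM //; last exact: G1.
    rewrite (Rconj s _ (conj As fs) Ht (fun x => K2 _)).
    by rewrite !mulgA mulgV mul1g.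
  - rewrite Zn; last by move/Hsu; tauto.
    rewrite (Zn s fs) (Zf u fu).
    have -> : c' \o (s \o u) = (c' \o s) \o u by [].
    by rewrite RM ?mulgA //; exact: G1.
  - rewrite Zf; last by apply/Hsu; tauto.
    rewrite (Zn s fs) (Zn u fu).
    have Ga := G1 s As fs; have Gt := G3 _ Ga; have Gw := G1 u Au fu.
    have E : s \o u = (c \o c) \o ((fun x => c' ((c' \o s) (c x))) \o (c' \o u)).
      by apply: functional_extensionality => x /=; rewrite !K2.
    rewrite E RM //; last exact: G4.
    rewrite Rcc RM // (Rconj (c' \o s) _ Ga Gt (fun x => K2 _)).
    by rewrite !mulgA mulgK.
have hn : det_sq h = false.
  by rewrite hE det_sq_phiP; move: gn; rewrite PSLE => /negPf.
have RP s : GalK (Qp p) s -> det_sq (R s).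
  by move=> Hs; rewrite RE det_sq_phiP -PSLE; apply: rP.
pose z s := (Z s * (Defs.eta v s)^-1)%g.
exists z; split; first split.
- move=> s As; rewrite PSLE /z.
  case: (classic (fixQ p s)) => fs.
    by rewrite (Zf s fs) eta_fix // invg1 mulg1; apply: RP.
  rewrite (Zn s fs) (eta_nfix v fs) (det_sqMP _ _ pr po) (det_sqMP _ _ pr po).
  rewrite (det_sqVP Vb pr po) (det_sq_VP v0) hn (RP _ (G1 s As fs)).
  by rewrite (negPf vns).
- move=> s u As Au; rewrite /z /Defs.act ZM // eta_comp // invMg.
  by rewrite !mulgA mulgKV.
- move=> s As.
  case: NF => _ _ _ _ [n [bb Hbb]].
  have Gid : GalK F id by split; [exact: isAut_id | by []].
  have [t0 Ht0] := rhoC id Gid.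
  have rho1 : rho id = 1%g.
    have E := rhoM id id Gid Gid; change (rho id = rho id * rho id)%g in E.
    apply/(mulgI (rho id)); rewrite mulg1 -E; reflexivity.
  pose tb := [seq bb i | i <- enum 'I_n].
  have Rcont a w : GalK (Qp p) a -> GalK (Qp p) w ->
      (forall x, x \in tb ++ t0 -> w x = a x) -> R w = R a.
    move=> [Aa fa] [Aw fw] H.
    have [a' Ka1 Ka2] : bijective a by case: Aa.
    have Aa' := isAut_inv Aa Ka1 Ka2.
    have Ad : isAut (a' \o w) := isAut_comp Aa' Aw.
    have GFd : GalK F (a' \o w).
      apply: (GalF_of Hbb Ad) => i /=; rewrite H ?Ka1 //.
      by rewrite mem_cat map_f ?mem_enum.
    have rd : r (a' \o w) = 1%g.
      rewrite (rrho _ GFd) (Ht0 _ GFd) ?rho1 //.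
      by move=> x Hx /=; rewrite H ?Ka1 // mem_cat Hx orbT.
    have E : w = a \o (a' \o w).
      by apply: functional_extensionality => x /=; rewrite Ka2.
    have rw : r (a \o (a' \o w)) = (r a * r (a' \o w))%g.
      exact: (rM a (a' \o w) (conj Aa fa) (GFQ _ GFd)).
    rewrite -E rd mulg1 in rw.
    rewrite !RE rw; reflexivity.
  exists (sqrtC (pstar p) :: tb ++ t0) => u Au Hu.
  have Hsq : u (sqrtC (pstar p)) = s (sqrtC (pstar p)) by apply: Hu; rewrite inE eqxx.
  have Hu' x : x \in tb ++ t0 -> u x = s x by move=> Hx; apply: Hu; rewrite inE Hx orbT.
  have fE : fixQ p u <-> fixQ p s by rewrite (fixQP p Au) (fixQP p As) Hsq.
  rewrite /z.
  case: (classic (fixQ p s)) => fs.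
    have fu : fixQ p u by apply/fE.
    rewrite (Zf s fs) (Zf u fu) (eta_fix v fs) (eta_fix v fu).
    rewrite (Rcont s u (conj As fs) (conj Au fu) Hu'); reflexivity.
  have fu : ~ fixQ p u by move/fE.
  rewrite (Zn s fs) (Zn u fu) (eta_nfix v fs) (eta_nfix v fu).
  rewrite (Rcont (c' \o s) (c' \o u) (G1 s As fs) (G1 u Au fu)); first reflexivity.
  by move=> x Hx /=; rewrite Hu'.
exists 1%g; first by rewrite PSLE det_sq1P.
move=> s [As fF]; have fs : fixQ p s := fun x Hx => fF x (QF Hx).
rewrite /z /Defs.act eta_fix // Zf // RE rrho; last by split.
rewrite dualE.
rewrite (@invg1 (PGL2 p)).
rewrite (mulg1 (phiP (rho s))) (mulg1 (1%g : PGL2 p)) (mulg1 (1%g : PGL2 p)).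
rewrite mulg1 mul1g; reflexivity.
Qed.
End Main2.

Theorem proposition4 (p : nat) (v : 'F_p) (F : algC -> Prop) (c : algC -> algC)
  (rho : (algC -> algC) -> PGL2 p) :
  prime p -> (7 <= p)%N ->
  v != 0 -> ~~ is_square v ->
  number_field F -> (forall x, Qp p x -> F x) ->
  GQ c -> (exists x, Qp p x /\ c x <> x) ->
  hom_on (GalK F) rho -> krull_continuous (GalK F) rho ->
  (* cyclotomic determinant: det rho(s) = class of eps_p(s) mod squares *)
  (forall s (z : algC) (k : nat), GalK F s -> p.-primitive_root z -> s z = z ^+ k ->
     (rho s \in PSL2 p) = is_square (k%:R : 'F_p)) ->
  (twist_defined_over_Q v F rho <->
   exists (g : PGL2 p) (r : (algC -> algC) -> PGL2 p),
     [/\ g \notin PSL2 p /\ hom_on (GalK (Qp p)) r,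
         (forall s, GalK (Qp p) s -> r s \in PSL2 p),
         (forall s, GalK F s -> r s = rho s),
         r (c \o c) = (g ^+ 2)%g
       & forall s t, GalK (Qp p) s -> GalK (Qp p) t ->
           (forall x, c (t x) = s (c x)) ->   (* t = c^{-1} s c *)
           r t = (g^-1 * r s * g)%g]).
Proof.
move=> pr p7 v0 vns NF QF Ac [x0 [Qx cx]] rhoM rhoC _.
have po : odd p by case: (even_prime pr) => // p2; rewrite p2 in p7.
have nfc : ~ fixQ p c by move=> H; apply: cx; apply: H.
split.
- exact: (forward pr po v0 vns QF Ac nfc).
- exact: (backward pr po v0 vns QF Ac nfc NF rhoM rhoC).
Qed.
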